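(* Let $k,c,\epsilon>0$ be constants and let $p=\frac{1+\epsilon}{d}$. Then with high probability every subset $X\subseteq V(Q^d)$ of size $|X|\ge c\, n d^{-k}$ satisfies $|\partial_{e,p}(X)|\le |X|\log d$.
   Context: $Q^d$ denotes the $d$-dimensional hypercube: vertex set $\{0,1\}^d$, two vertices adjacent iff they differ in exactly one coordinate; $n:=2^d$. $Q^d_p$ denotes the random subgraph of $Q^d$ on the same vertex set obtained by retaining each edge of $Q^d$ independently with probability $p$. For $X\subseteq V(Q^d)$, $\partial_{e,p}(X)$ is the set of edges of $Q^d_p$ with one endpoint in $X$ and the other in $V(Q^d)\setminus X$. ''With high probability'' means with probability tending to one as $d\to\infty$. *)

(* Defs.v *)
From HB Require Import structures.
From mathcomp Require Import all_boot all_order all_algebra.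
From mathcomp Require Import all_classical all_reals all_analysis.
Set Implicit Arguments. Unset Strict Implicit. Unset Printing Implicit Defensive.
Import Order.TTheory GRing.Theory Num.Theory.
Local Open Scope ring_scope.

Definition vert (d : nat) := {ffun 'I_d -> bool}.

Definition flip (d : nat) (x : vert d) (i : 'I_d) : vert d :=
  [ffun j => if j == i then ~~ x j else x j].

(* An edge of Q^d is encoded as a pair (x, i) with x i = false: it joins
   x and flip x i. Every edge of Q^d has exactly one such encoding. *)
Definition cube_edges (d : nat) : {set vert d * 'I_d} :=
  [set e : vert d * 'I_d | ~~ e.1 e.2].

Definition edge_boundary (d : nat) (S : {set vert d * 'I_d}) (X : {set vert d})
  : {set vert d * 'I_d} :=
  [set e in S | ((e : vert d * 'I_d).1 \in X) != (flip e.1 e.2 \in X)].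

(* Probability that the random subgraph Q^d_p (each edge kept independently
   with probability p) has edge set satisfying P. *)
Definition subgraph_prob (R : realType) (d : nat) (p : R)
  (P : {set vert d * 'I_d} -> bool) : R :=
  \sum_(S : {set vert d * 'I_d} | (S \subset cube_edges d) && P S)
     p ^+ #|S| * (1 - p) ^+ (#|cube_edges d| - #|S|).

(* Main.v *)
Require Import Defs.
From HB Require Import structures.
From mathcomp Require Import all_boot all_order all_algebra.
From mathcomp Require Import all_classical all_reals all_analysis.
Import Order.TTheory GRing.Theory Num.Theory.
Import numFieldNormedType.Exports.
From mathcomp Require Import zify ring lra.

Section Comb.
Variable d : nat.
Implicit Types (x v : vert d) (S : {set vert d * 'I_d}) (X : {set vert d}).

Lemma flipK x i : flip (flip x i) i = x.
Proof.
apply/ffunP=> j; rewrite !ffunE; case: (j == i) => //=; by rewrite negbK.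
Qed.

Lemma flip_at x i : flip x i i = ~~ x i.
Proof. by rewrite ffunE eqxx. Qed.

Definition star v := [set e : vert d * 'I_d | (e.1 == v) || (flip e.1 e.2 == v)].

Lemma card_star v : #|star v :&: cube_edges d| <= d.
Proof.
rewrite -(@card_in_imset _ _ snd); last first.
  move=> [x1 i1] [x2 i2]; rewrite !inE /=.
  move=> /andP[/orP[/eqP e1|/eqP e1] n1] /andP[/orP[/eqP e2|/eqP e2] n2] /= ei;
    subst i2.
  - by rewrite e1 e2.
  - have := congr1 (fun y : vert d => y i1) e2.
    by rewrite flip_at -e1 (negbTE n1) n2.
  - have := congr1 (fun y : vert d => y i1) e1.
    by rewrite flip_at -e2 (negbTE n2) n1.
  - by rewrite -(flipK x1 i1) -(flipK x2 i1) e1 e2.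
by apply: leq_trans (max_card _) _; rewrite card_ord.
Qed.

Lemma boundary_le S X :
  #|edge_boundary S X| <= \sum_(v in X) #|S :&: star v|.
Proof.
apply: leq_trans (unstable.card_big_setU _ _ _).
apply: subset_leq_card; apply/fintype.subsetP => e; rewrite inE => /andP[eS bd].
case: (boolP (e.1 \in X)) => h1.
  by apply/finset.bigcupP; exists e.1 => //; rewrite !inE eS eqxx.
have h2 : flip e.1 e.2 \in X by move: bd; rewrite (negbTE h1); case: (_ \in X).
by apply/finset.bigcupP; exists (flip e.1 e.2) => //; rewrite !inE eS eqxx orbT.
Qed.

Lemma binJ D J : 0 < J -> D <= J + J * 'C(D, J).
Proof.
move=> J0; case: (ltnP D J) => h; first by apply: leq_trans (ltnW h) (leq_addr _ _).
apply: leq_trans (leq_addl J _).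
case: J J0 h => // j _ h.
rewrite -mul_bin_diag; apply: leq_pmulr; rewrite bin_gt0.
by case: D h => //= D; rewrite ltnS.
Qed.

Lemma det_bound S X J : 0 < J ->
  #|edge_boundary S X| <= #|X| * J + J * \sum_v 'C(#|S :&: star v|, J).
Proof.
move=> J0; apply: leq_trans (boundary_le S X) _.
have H : \sum_(v in X) #|S :&: star v| <= \sum_(v in X) (J + J * 'C(#|S :&: star v|, J)) by apply: leq_sum => v _; exact: binJ.
apply: leq_trans H _.
rewrite big_split /= sum_nat_const -big_distrr /= leq_add2l leq_mul2l.
by rewrite [X in _ <= X](bigID (mem X)) /= leq_addr orbT.
Qed.

Lemma card_vert : #|vert d| = 2 ^ d.
Proof. by rewrite card_ffun card_bool card_ord. Qed.

Lemma ffact_le n m : n ^_ m <= n ^ m.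
Proof.
elim: m n => [|m IH] n; first by rewrite ffactn0 expn0.
rewrite ffactnS expnS leq_mul2l; apply/orP; right.
apply: leq_trans (IH _) _.
case: m {IH} => [|m]; first by rewrite !expn0.
by rewrite leq_exp2r // leq_pred.
Qed.

Lemma bin_fact_le n m : 'C(n, m) * m`! <= n ^ m.
Proof. by rewrite bin_ffact ffact_le. Qed.
End Comb.
Arguments star {d} v.

Local Open Scope ring_scope.

Section Prob.
Variable R : realType.
Variable p : R.

Lemma sum_subsets_binom (T : finType) (A : {set T}) :
  \sum_(U : {set T} | U \subset A) p ^+ #|U| * (1 - p) ^+ (#|A| - #|U|) = 1.
Proof.
rewrite (partition_big (fun U : {set T} => inord #|U| : 'I_#|A|.+1) xpredT) //=.
transitivity ((1 - p + p) ^+ #|A|); last by rewrite subrK expr1n.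
rewrite exprDn; apply: eq_bigr => k _.
rewrite (eq_bigl (fun U => U \in [set U : {set T} | U \subset A & #|U| == k])); last first.
  move=> U; rewrite !inE /=; case: (boolP (U \subset A)) => //= sUA.
  have hU : (#|U| <= #|A|)%N by apply: subset_leq_card.
  apply/eqP/eqP => [<-|->]; last by apply: val_inj; rewrite /= inordK.
  by rewrite /= inordK.
rewrite (eq_bigr (fun _ => p ^+ k * (1 - p) ^+ (#|A| - k))); last first.
  by move=> U /[!inE] /andP[_ /eqP ->].
by rewrite sumr_const cards_draws mulrC.
Qed.

Variable d : nat.
Local Notation E := (cube_edges d).
Definition w (S : {set vert d * 'I_d}) : R := p ^+ #|S| * (1 - p) ^+ (#|E| - #|S|).

Lemma sum_w : \sum_(S : {set vert d * 'I_d} | S \subset E) w S = 1.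
Proof. exact: sum_subsets_binom. Qed.

Lemma sum_supsets (T : {set vert d * 'I_d}) : T \subset E ->
  \sum_(S : {set vert d * 'I_d} | (S \subset E) && (T \subset S)) w S = p ^+ #|T|.
Proof.
move=> hT.
rewrite (reindex_onto (fun U => U :|: T) (fun S => S :\: T)); last first.
  move=> S /andP[_ TS]; apply/finset.setP=> x; rewrite !inE.
  by case: (boolP (x \in T)) => xT /=; rewrite ?orbF // (fintype.subsetP TS x xT).
rewrite (eq_bigl (fun U : {set vert d * 'I_d} => U \subset E :\: T)); last first.
  move=> U; rewrite finset.setDUl finset.setDv finset.setU0 finset.subUset hT finset.subsetUr andbT finset.subsetD.
  rewrite andbT; congr (_ && _).
  by apply/idP/idP => [/eqP/finset.setDidPl|/finset.setDidPl/eqP].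
rewrite -[RHS]mulr1 -(sum_subsets_binom _ (E :\: T)) big_distrr /=.
apply: eq_bigr => U; rewrite finset.subsetD => /andP[_ dUT].
have hc : #|U :|: T| = (#|U| + #|T|)%N.
  by rewrite finset.cardsU (finset.disjoint_setI0 dUT) finset.cards0 subn0.
have hE : #|E :\: T| = (#|E| - #|T|)%N.
  by rewrite finset.cardsD (finset.setIidPr hT).
rewrite /w hc hE exprD mulrA [p ^+ #|T| * _]mulrC; congr (_ * _ * _).
by rewrite addnC subnDA.
Qed.

Lemma exp_count (B : {set vert d * 'I_d}) (J : nat) :
  \sum_(S : {set vert d * 'I_d} | S \subset E) w S * ('C(#|S :&: B|, J))%:R
  = ('C(#|B :&: E|, J))%:R * p ^+ J.
Proof.
transitivity (\sum_(S : {set vert d * 'I_d} | S \subset E) \sum_(T : {set vert d * 'I_d} | (T \subset B :&: E) && (#|T| == J))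
                 w S * (if T \subset S then 1 else 0)).
  apply: eq_bigr => S sSE; rewrite -big_distrr /=; congr (_ * _).
  rewrite -cards_draws -sum1_card natr_sum big_mkcond [RHS]big_mkcond /=.
  apply: eq_bigr => T _; rewrite !inE !finset.subsetI.
  case TS: (T \subset S); last by case: (T \subset B); case: (T \subset E); case: (#|T| == J).
  by rewrite (fintype.subset_trans TS sSE) /= andbT.
rewrite exchange_big /=.
rewrite (eq_bigr (fun _ => p ^+ J)); last first.
  move=> T /andP[TBE /eqP <-].
  rewrite -sum_supsets; last by apply: fintype.subset_trans TBE (finset.subsetIr _ _).
  rewrite [RHS]big_mkcondr; apply: eq_bigr => S _.
  by case: ifP; rewrite ?mulr1 ?mulr0.
rewrite (eq_bigl (fun T => T \in [set T : {set vert d * 'I_d} | T \subset B :&: E & #|T| == J])).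
  by rewrite sumr_const cards_draws mulr_natl.
by move=> T; rewrite inE.
Qed.

End Prob.
Arguments w {R} p {d} S.
Arguments sum_w {R} p d.
Arguments exp_count {R} p {d} B J.
Arguments sum_supsets {R} p {d} T.

Section Main.
Variables (R : realType) (k c eps : R).

Definition Bc := 2 * ((1 + eps) * expR (2 * k)).
Definition Kc := 2 * expR (2 * k) / c.

Definition Pd (d : nat) (S : {set vert d * 'I_d}) : bool :=
  [forall X : {set vert d},
          (c * (2 ^ d)%:R * (d%:R `^ (- k)) <= #|X|%:R) ==>
          ((#|edge_boundary S X|)%:R <= #|X|%:R * ln (d%:R : R))].

Lemma sum_const_vert (d : nat) (x : R) : \sum_(v : vert d) x = x *+ 2 ^ d.
Proof. by rewrite sumr_const card_vert. Qed.

Lemma per_d (k0 : 0 < k) (c0 : 0 < c) (e0 : 0 < eps) (d : nat) : 1 + eps <= d%:R -> 2 <= ln (d%:R : R) ->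
  1 - Kc * exp_coeff Bc (Num.truncn (ln (d%:R : R) / 2))
    <= subgraph_prob ((1 + eps) / d%:R) (Pd d) <= 1.
Proof.
move=> hd hL.
set p := (1 + eps) / d%:R. set L := ln (d%:R : R). set J := Num.truncn (L / 2).
set m := c * (2 ^ d)%:R * d%:R `^ (- k).
have {}hL : 2 <= L by [].
have {}hd : 1 + eps <= d%:R by [].
have d0 : 0 < d%:R :> R by lra.
have p0 : 0 <= p by rewrite /p divr_ge0 //; lra.
have p1 : p <= 1 by rewrite /p ler_pdivrMr // mul1r.
have w0 : forall S : {set vert d * 'I_d}, 0 <= w p S.
  by move=> S; rewrite /w mulr_ge0 // exprn_ge0 // subr_ge0.
have hJ : J%:R <= L / 2 by rewrite truncn_le; lra.
have hJ2 : L / 2 < J.+1%:R by rewrite -truncn_le_nat.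
clearbody J.
have e1 : 0 <= 1 + eps by lra.
have J0 : (0 < J)%N.
  rewrite lt0n; apply/negP => /eqP J0; move: hJ2; rewrite J0 /=; lra.
have m0 : 0 < m by rewrite /m !mulr_gt0 ?ltr0n ?expn_gt0 // powR_gt0.
have a0 : 0 < m * L / 2 by apply: divr_gt0 => //; apply: mulr_gt0 => //; lra.
set Y := fun S : {set vert d * 'I_d} => (J * \sum_(v : vert d) 'C(#|S :&: star v|, J))%N.
have Pdet : forall S, (Y S)%:R <= m * L / 2 -> Pd d S.
  move=> S hY; apply/forallP => X; apply/implyP => hX.
  apply: (@le_trans _ _ ((#|X| * J + Y S)%N)%:R); first by rewrite ler_nat det_bound.
  rewrite natrD natrM.
  have h1 : #|X|%:R * J%:R <= #|X|%:R * L / 2 :> R.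
    by rewrite -mulrA; apply: ler_wpM2l.
  have h2 : m * L / 2 <= #|X|%:R * L / 2.
    rewrite ler_pM2r // ler_wpM2r //; lra.
  rewrite -/L; lra.
have -> : subgraph_prob p (Pd d) =
   \sum_(S : {set vert d * 'I_d} | (S \subset cube_edges d) && Pd d S) w p S by [].
apply/andP; split; last first.
  rewrite -(sum_w p d) [X in _ <= X](bigID (Pd d)) /= lerDl.
  by apply: sumr_ge0 => S _; apply: w0.
set a := m * L / 2.
have step1 : \sum_(S : {set vert d * 'I_d} | S \subset cube_edges d) w p S * (1 - (Y S)%:R / a)
    <= \sum_(S : {set vert d * 'I_d} | (S \subset cube_edges d) && Pd d S) w p S.
  rewrite big_mkcondr /=; apply: ler_sum => S _; case: ifP => PS.
    rewrite mulrBr mulr1 lerBlDr lerDl mulr_ge0 // divr_ge0 //; exact: ltW.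
  apply: mulr_ge0_le0; first exact: w0.
  have : a < (Y S)%:R by rewrite ltNge; apply/negP => /Pdet; rewrite PS.
  move=> hYa; rewrite subr_le0 ler_pdivlMr // mul1r; exact: ltW.
have step2 : \sum_(S : {set vert d * 'I_d} | S \subset cube_edges d) w p S * (1 - (Y S)%:R / a)
    = 1 - (\sum_(S : {set vert d * 'I_d} | S \subset cube_edges d) w p S * (Y S)%:R) / a.
  under eq_bigr do rewrite mulrBr mulr1.
  rewrite sumrB sum_w; congr (1 - _).
  by rewrite mulr_suml; apply: eq_bigr => S _; rewrite mulrA.
have step3 : \sum_(S : {set vert d * 'I_d} | S \subset cube_edges d) w p S * (Y S)%:R
    <= J%:R * ((2 ^ d)%:R * ('C(d, J)%:R * p ^+ J)).
  rewrite /Y.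
  under eq_bigr do rewrite natrM natr_sum mulrCA big_distrr /=.
  rewrite -big_distrr /= exchange_big /=.
  apply: ler_wpM2l => //.
  under eq_bigr do rewrite exp_count.
  rewrite mulr_natl -(sum_const_vert d) ler_sum // => v _.
  by rewrite ler_wpM2r ?exprn_ge0 // ler_nat leq_bin2l // card_star.
have step4 : 'C(d, J)%:R * p ^+ J <= (1 + eps) ^+ J / J`!%:R.
  have hC : 'C(d, J)%:R <= d%:R ^+ J / J`!%:R :> R.
    by rewrite ler_pdivlMr ?ltr0n ?fact_gt0 // -natrM -natrX ler_nat bin_fact_le.
  rewrite /p expr_div_n.
  apply: le_trans (ler_wpM2r _ hC) _.
    by rewrite divr_ge0 ?exprn_ge0 // ltW.
  have dJ : d%:R ^+ J != 0 :> R by rewrite expf_neq0 // gt_eqF.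
  have fJ : J`!%:R != 0 :> R by rewrite pnatr_eq0 -lt0n fact_gt0.
  rewrite le_eqVlt; apply/orP; left; apply/eqP; field; by rewrite fJ dJ.
have step5 : J%:R * (1 + eps) ^+ J <= (2 * (1 + eps)) ^+ J.
  rewrite exprMn; apply: ler_wpM2r; first exact: exprn_ge0.
  by rewrite -natrX ler_nat ltnW // ltn_expl.
have hpow : 1 <= d%:R `^ (- k) * expR (2 * k) ^+ J.+1.
  rewrite /powR (gt_eqF d0) -/L -expRM_natr -expRD.
  apply: le_trans (expR_ge1Dx _); rewrite lerDl.
  have : L < 2 * J.+1%:R by lra.
  nra.
apply: le_trans step1; rewrite step2 lerD2l lerN2 ler_pdivrMr //.
apply: le_trans step3 _.
have fJ : J`!%:R != 0 :> R by rewrite pnatr_eq0 -lt0n fact_gt0.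
have G : J%:R * ((2 ^ d)%:R * ('C(d, J)%:R * p ^+ J))
    <= (2 ^ d)%:R * ((2 * (1 + eps)) ^+ J / J`!%:R).
  apply: (@le_trans _ _ (J%:R * ((2 ^ d)%:R * ((1 + eps) ^+ J / J`!%:R)))).
    by apply: ler_wpM2l => //; apply: ler_wpM2l.
  have -> : J%:R * ((2 ^ d)%:R * ((1 + eps) ^+ J / J`!%:R))
      = (2 ^ d)%:R * ((J%:R * (1 + eps) ^+ J) / J`!%:R).
    by rewrite !mulrA [J%:R * _]mulrC.
  by rewrite ler_wpM2l // ler_wpM2r // invr_ge0 ler0n.
have E1 : Kc * exp_coeff Bc J * a = (2 ^ d)%:R * ((2 * (1 + eps)) ^+ J / J`!%:R)
    * ((d%:R `^ (- k) * expR (2 * k) ^+ J.+1) * L).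
  have -> : Bc = (2 * (1 + eps)) * expR (2 * k) by rewrite /Bc mulrA.
  rewrite /Kc exp_coeffE /a /m /= exprMn exprS.
  field; by rewrite fJ gt_eqF.
apply: le_trans G _; rewrite E1; apply: ler_peMr.
  by rewrite mulr_ge0 // mulr_ge0 // exprn_ge0 // mulr_ge0.
apply: mulr_ege1 => //; lra.
Qed.
End Main.

Local Open Scope classical_set_scope.
Local Open Scope ring_scope.

Lemma trunc_ln_cvg (R : realType) (x : R) :
  (fun d : nat => exp_coeff x (Num.truncn (ln (d%:R : R) / 2))) @ \oo --> 0.
Proof.
apply/cvgrPdist_le => e e0.
have := cvg_exp_coeff x; move/cvgrPdist_le => /(_ e e0) [N _ HN].
have H := nbhs_infty_ger (expR (2 * N%:R) : R).
near=> d.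
apply: HN => /=.
have hd : expR (2 * N%:R) <= d%:R :> R by near: d.
have d0 : 0 < d%:R :> R by apply: lt_le_trans hd; exact: expR_gt0.
have hl : 2 * N%:R <= ln (d%:R : R).
  by rewrite -[X in X <= _]expRK ler_ln ?posrE ?expR_gt0.
rewrite truncn_ge_nat.
  by rewrite ler_pdivlMr // mulrC.
by apply: divr_ge0 => //; apply: le_trans hl; rewrite mulr_ge0.
Unshelve. all: by end_near.
Qed.

Lemma near_ln (R : realType) (y : R) : \forall d \near \oo, y <= ln (d%:R : R).
Proof.
have H := nbhs_infty_ger (expR y : R).
near=> d.
have hd : expR y <= d%:R :> R by near: d.
have d0 : 0 < d%:R :> R by apply: lt_le_trans hd; exact: expR_gt0.
by rewrite -[X in X <= _]expRK ler_ln ?posrE ?expR_gt0.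
Unshelve. all: by end_near.
Qed.

Theorem lemma2p5 (R : realType) (k c eps : R) :
  0 < k -> 0 < c -> 0 < eps ->
  (fun d : nat =>
     subgraph_prob ((1 + eps) / d%:R)
       (fun S => [forall X : {set vert d},
          (c * (2 ^ d)%:R * (d%:R `^ (- k)) <= #|X|%:R) ==>
          ((#|edge_boundary S X|)%:R <= #|X|%:R * ln (d%:R : R))]))
  @ \oo --> (1 : R).
Proof.
move=> k0 c0 e0.
apply: (@squeeze_cvgr _ _ _ _
  (fun d : nat => 1 - @Kc R k c * exp_coeff (@Bc R k eps) (Num.truncn (ln (d%:R : R) / 2)))
  (fun _ => 1)).
- have H1 := nbhs_infty_ger (1 + eps : R).
  have H2 := @near_ln R 2.
  near=> d.
  apply: (@per_d R k c eps k0 c0 e0 d).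
    by near: d.
  by near: d.
- rewrite -[X in _ --> X]subr0; apply: cvgB; first exact: cvg_cst.
  rewrite -(mulr0 (@Kc R k c)); apply: cvgMl_tmp.
  exact: trunc_ln_cvg.
- exact: cvg_cst.
Unshelve. all: by end_near.
Qed.
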